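(* Let $X$ be a real Banach space such that $d^*(t) > 0$ for every $0<t<2$. Then for every $0<t<2$: (a) $\delta_{X^*}(t) \geq d^*(t/4)$, and (b) $d^*(t) \geq \delta_{X^*}(t/20)$.
   Context: $B(\cdot)$, $S(\cdot)$ denote closed unit ball and unit sphere. For $0<t<2$, $f \in S(X^* )$, $x \in S(X)$: $s^*(f,x,t) := \inf\{\|f+h\| - 1 : h\in X^*,\ \|h\| \geq t/4,\ h(x)=0\}$; $d^*(f,t) := \sup_{x\in S(X)} s^*(f,x,t)$; $d^*(t) := \inf_{f\in S(X^* )} d^*(f,t)$. The modulus of convexity of $X^*$ is $\delta_{X^*}(t) := \inf\{1 - \|f+g\|/2 : f,g \in S(X^* ),\ \|f-g\| \geq t\}$. *)

(* Defs.v *)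
From HB Require Import structures.
From mathcomp Require Import all_boot all_order all_algebra.
From mathcomp Require Import all_classical all_reals all_analysis.
Set Implicit Arguments. Unset Strict Implicit. Unset Printing Implicit Defensive.
Import Order.TTheory GRing.Theory Num.Theory.
Import numFieldNormedType.Exports.
Local Open Scope classical_set_scope.
Local Open Scope ring_scope.

Section Dual.
Context {R : realType} {X : normedModType R}.

Definition is_dual (f : X -> R) : Prop :=
  (forall (a : R) (x y : X), f (a *: x + y) = a * f x + f y) /\ continuous f.

Definition dnorm (f : X -> R) : R :=
  sup [set `|f x| | x in [set x : X | `|x| <= 1]].

Definition sstar (f : X -> R) (x : X) (t : R) : \bar R :=
  ereal_inf [set ((dnorm (f \+ h) - 1)%:E) |
     h in [set h : X -> R | [/\ is_dual h, t / 4 <= dnorm h & h x = 0]]].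

Definition dstar_f (f : X -> R) (t : R) : \bar R :=
  ereal_sup [set sstar f x t | x in [set x : X | `|x| = 1]].

Definition dstar (t : R) : \bar R :=
  ereal_inf [set dstar_f f t | f in [set f : X -> R | is_dual f /\ dnorm f = 1]].

Definition delta_dual (t : R) : \bar R :=
  ereal_inf [set ((1 - dnorm (fg.1 \+ fg.2) / 2)%:E) |
     fg in [set fg : (X -> R) * (X -> R) |
              [/\ is_dual fg.1, dnorm fg.1 = 1, is_dual fg.2, dnorm fg.2 = 1 &
                  t <= dnorm (fg.1 \- fg.2)]]].

End Dual.

(* Main.v *)
Require Import Defs.
From HB Require Import structures.
From mathcomp Require Import all_boot all_order all_algebra.
From mathcomp Require Import all_classical all_reals all_analysis.
From mathcomp Require Import ring lra.
Import Order.TTheory GRing.Theory Num.Theory.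
Import numFieldNormedType.Exports.
Local Open Scope classical_set_scope.
Local Open Scope ring_scope.

Section DualBasics.
Context {R : realType} {X : normedModType R}.
Implicit Types (f g h : X -> R) (x y : X).

Lemma dual0 {f} : is_dual f -> f 0 = 0.
Proof.
move=> [lin _]; have := lin 1 0 0; rewrite scale1r addr0 mul1r => H.
lra.
Qed.

Lemma dualD f x y : is_dual f -> f (x + y) = f x + f y.
Proof. by move=> [lin _]; have := lin 1 x y; rewrite scale1r mul1r. Qed.

Lemma dualZ f a x : is_dual f -> f (a *: x) = a * f x.
Proof.
move=> df; have [lin _] := df; have := lin a x 0.
by rewrite addr0 (dual0 df) addr0.
Qed.

Lemma dualN f x : is_dual f -> f (- x) = - f x.
Proof. by move=> df; rewrite -scaleN1r dualZ // mulN1r. Qed.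

Lemma dualB f x y : is_dual f -> f (x - y) = f x - f y.
Proof. by move=> df; rewrite dualD // dualN. Qed.

Lemma is_dualD {f g} : is_dual f -> is_dual g -> is_dual (f \+ g).
Proof.
move=> [lf cf] [lg cg]; split=> [a x y|x] /=.
  by rewrite lf lg; ring.
exact: (@continuousD _ _ _ f g x (cf x) (cg x)).
Qed.

Lemma is_dualZ {f} a : is_dual f -> is_dual (fun x => a * f x).
Proof.
move=> [lf cf]; split=> [b x y|x] /=.
  by rewrite lf; ring.
exact: (@continuousM _ _ (fun=> a) f x (@cst_continuous _ _ a x) (cf x)).
Qed.

Lemma is_dualB {f g} : is_dual f -> is_dual g -> is_dual (f \- g).
Proof.
move=> df dg.
have -> : f \- g = f \+ (fun x => (-1) * g x).
  by apply/funext => x /=; rewrite mulN1r.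
by apply: is_dualD => //; exact: is_dualZ.
Qed.

Lemma dual_bounded {f} : is_dual f -> exists2 C, 0 < C & forall x, `|f x| <= C * `|x|.
Proof.
move=> df; have [_ cf] := df.
have := cf 0; rewrite /continuous_at (dual0 df) => /cvgrPdist_lt /(_ 1 ltr01).
move=> /nbhs_ballP [e /= e0 He].
exists (2 / e); first by rewrite divr_gt0.
move=> x; have [->|x0] := eqVneq x 0.
  by rewrite (dual0 df) !normr0 mulr0.
have nx0 : 0 < `|x| by rewrite normr_gt0.
pose y := (e / (2 * `|x|)) *: x.
have ny : `|y| = e / 2.
  rewrite /y normrZ ger0_norm; last by rewrite divr_ge0 // ?ltW // mulr_gt0.
  by field; rewrite gt_eqF.
have : ball (0 : X) e y.
  rewrite -ball_normE /ball_ /= sub0r normrN ny; lra.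
move=> /He; rewrite sub0r normrN /y dualZ // normrM ger0_norm; last first.
  by rewrite divr_ge0 // ?ltW // mulr_gt0.
move=> H.
have a0 : 0 < e / (2 * `|x|) by rewrite divr_gt0 // mulr_gt0.
have H2 : `|f x| < 1 / (e / (2 * `|x|)) by rewrite ltr_pdivlMr // mulrC.
suff <- : 1 / (e / (2 * `|x|)) = 2 / e * `|x| by rewrite ltW.
by field; rewrite !gt_eqF.
Qed.

Let ballset f := [set `|f x| | x in [set x : X | `|x| <= 1]].

Lemma ballset_n0 f : ballset f !=set0.
Proof. by exists `|f 0|, 0 => //=; rewrite normr0. Qed.

Lemma ballset_ub {f} : is_dual f -> has_ubound (ballset f).
Proof.
move=> df; have [C C0 HC] := dual_bounded df.
exists C => _ [x /= x1 <-]; apply: (le_trans (HC x)).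
by rewrite ler_piMr // ltW.
Qed.

Lemma dnorm_ub {f} x : is_dual f -> `|x| <= 1 -> `|f x| <= dnorm f.
Proof.
move=> df x1; apply: sup_upper_bound; last by exists x.
by split; [exact: ballset_n0 | exact: ballset_ub].
Qed.

Lemma dnorm_le f c : (forall x, `|x| <= 1 -> `|f x| <= c) -> dnorm f <= c.
Proof.
move=> H; apply: ge_sup; first exact: ballset_n0.
by move=> _ [x /= x1 <-]; exact: H.
Qed.

Lemma dnorm_ge0 {f} : is_dual f -> 0 <= dnorm f.
Proof.
move=> df; apply: le_trans (dnorm_ub 0 df _); first exact: normr_ge0.
by rewrite normr0.
Qed.

Lemma le_dnorm {f} x : is_dual f -> `|f x| <= dnorm f * `|x|.
Proof.
move=> df; have [->|x0] := eqVneq x 0.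
  by rewrite (dual0 df) !normr0 mulr0.
have nx0 : 0 < `|x| by rewrite normr_gt0.
have h1 : `|(`|x|^-1 *: x)| <= 1.
  by rewrite normrZ normfV normr_id mulVf ?gt_eqF.
have := @dnorm_ub f (`|x|^-1 *: x) df h1.
rewrite dualZ // normrM ger0_norm ?invr_ge0 ?normr_ge0 //.
by rewrite ler_pdivrMl // mulrC.
Qed.

Lemma dnorm_approx f e : is_dual f -> 0 < e ->
  exists2 x, `|x| <= 1 & dnorm f - e < `|f x|.
Proof.
move=> df e0.
have [_ [x /= x1 <-] H] := sup_adherent e0 (conj (ballset_n0 f) (ballset_ub df)).
by exists x.
Qed.

Lemma dnormD {f g} : is_dual f -> is_dual g -> dnorm (f \+ g) <= dnorm f + dnorm g.
Proof.
move=> df dg; apply: dnorm_le => x x1 /=.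
apply: le_trans (ler_normD _ _) _.
by apply: lerD; exact: dnorm_ub.
Qed.

Lemma dnormZ {f} a : is_dual f -> dnorm (fun x => a * f x) = `|a| * dnorm f.
Proof.
move=> df; apply/eqP; rewrite eq_le; apply/andP; split.
  apply: dnorm_le => x x1; rewrite normrM.
  by apply: ler_wpM2l => //; exact: dnorm_ub.
have [->|a0] := eqVneq a 0.
  by rewrite normr0 mul0r; apply: dnorm_ge0; exact: is_dualZ.
rewrite -ler_pdivlMl ?normr_gt0 //.
apply: dnorm_le => x x1; rewrite ler_pdivlMl ?normr_gt0 // -normrM.
by apply: dnorm_ub => //; exact: is_dualZ.
Qed.

Lemma dnorm_dual_ext f g : f =1 g -> dnorm f = dnorm g.
Proof. by move=> /funext ->. Qed.

Lemma dnorm_pos f x : is_dual f -> f x != 0 -> 0 < dnorm f.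
Proof.
move=> df fx; have [x0|x0] := eqVneq x 0.
  by move: fx; rewrite x0 dual0 // eqxx.
have := le_dnorm x df; rewrite -(normr_gt0 (f x)) in fx.
move=> H; have : 0 < dnorm f * `|x| by apply: lt_le_trans H.
by rewrite pmulr_lgt0 // normr_gt0.
Qed.

End DualBasics.


Section HahnBanach.
Context {R : realType} {X : lmodType R}.
Variables (p : X -> R) (y : X).
Hypothesis pD : forall z w, p (z + w) <= p z + p w.
Hypothesis pZ : forall (c : R) z, p (c *: z) = `|c| * p z.

Let p0 : p 0 = 0.
Proof. by have := pZ 0 0; rewrite scale0r normr0 mul0r. Qed.

Let pN z : p (- z) = p z.
Proof. by rewrite -scaleN1r pZ normrN normr1 mul1r. Qed.

Let p_ge0 z : 0 <= p z.
Proof. by have := pD z (- z); rewrite subrr p0 pN => H; lra. Qed.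

Definition graphP (G : set (X * R)) : Prop :=
 [/\ forall z a b, G (z, a) -> G (z, b) -> a = b,
     forall (c : R) z w a b, G (z, a) -> G (w, b) -> G (c *: z + w, c * a + b),
     forall z a, G (z, a) -> a <= p z,
     G (0, 0) & G (y, p y)].

Let PP (G : set (X * R)) := G = set0 \/ graphP G.

Let PP_ne G q : PP G -> G q -> graphP G.
Proof. by move=> [G0|//] Gq; move: Gq; rewrite G0. Qed.

Let chainP (F : set (set (X * R))) : F `<=` PP -> total_on F subset ->
  PP (\bigcup_(G in F) G).
Proof.
move=> FP Ftot.
case: (pselect (\bigcup_(G in F) G = set0)) => [U0|Un]; first by left.
have [q [G0 FG0 G0q]] : exists q, (\bigcup_(G in F) G) q.
  apply: contrapT => H; apply: Un; apply/seteqP; split=> // q' Uq'.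
  by exfalso; apply: H; exists q'.
have gr G q' : F G -> G q' -> graphP G by move=> FG Gq; exact: (@PP_ne G q' (FP G FG) Gq).
have [g1 g2 g3 g4 g5] := gr _ _ FG0 G0q.
right; split.
- move=> z a b [G1 FG1 G1a] [G2 FG2 G2b].
  have [S12|S21] := Ftot _ _ FG1 FG2.
    by have [h1 _ _ _ _] := gr _ _ FG2 G2b; apply: h1 G2b; exact: S12.
  by have [h1 _ _ _ _] := gr _ _ FG1 G1a; apply: h1 G1a _; exact: S21.
- move=> c z w a b [G1 FG1 G1a] [G2 FG2 G2b].
  have [S12|S21] := Ftot _ _ FG1 FG2.
    have [_ h2 _ _ _] := gr _ _ FG2 G2b; exists G2 => //; apply: h2 G2b; exact: S12.
  have [_ h2 _ _ _] := gr _ _ FG1 G1a; exists G1 => //; apply: h2 G1a _; exact: S21.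
- move=> z a [G1 FG1 G1a]; have [_ _ h3 _ _] := gr _ _ FG1 G1a; exact: h3.
- by exists G0.
- by exists G0.
Qed.

Lemma hahn_banach : exists l : X -> R,
  [/\ forall (c : R) z w, l (c *: z + w) = c * l z + l w,
      forall z, l z <= p z & l y = p y].
Proof.
have [A [PA Amax]] := Zorn_bigcup chainP.
pose G0 : set (X * R) := [set q | exists b : R, q = (b *: y, b * p y)].
have gG0 : graphP G0.
  split.
  - move=> z a b [b1 E1] [b2 E2]; case: E1 => E1z ->; case: E2 => E2z ->.
    have [y0|y0] := eqVneq y 0; first by rewrite y0 p0 !mulr0.
    have : (b1 - b2) *: y = 0 by rewrite scalerBl -E1z -E2z subrr.
    by move/eqP; rewrite scaler_eq0 (negbTE y0) orbF subr_eq0 => /eqP ->.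
  - move=> c z w a b [b1 E1] [b2 E2]; case: E1 => -> ->; case: E2 => -> ->.
    exists (c * b1 + b2); congr (_, _); last by ring.
    by rewrite scalerDl scalerA.
  - move=> z a [b E]; case: E => -> ->; rewrite pZ.
    by apply: ler_wpM2r; [exact: p_ge0 | exact: ler_norm].
  - by exists 0; rewrite scale0r mul0r.
  - by exists 1; rewrite scale1r mul1r.
have gA : graphP A.
  case: PA => // A0; exfalso; apply: (Amax G0); last by right.
  rewrite A0; split; first by move=> q.
  by move=> /(_ (0, 0)); apply; exists 0; rewrite scale0r mul0r.
have [g1 g2 g3 g4 g5] := gA.
have Dtot : forall z, exists a, A (z, a).
  move=> z; apply: contrapT => nz.
  have nD : forall a, ~ A (z, a) by move=> a Aa; apply: nz; exists a.
  pose S := [set r | exists w a, A (w, a) /\ r = a - p (w - z)].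
  have Sn : S !=set0 by exists (0 - p (0 - z)), 0, 0.
  have Sub : forall w' a', A (w', a') -> ubound S (p (w' + z) - a').
    move=> w' a' Aw' _ [w [a [Aw ->]]].
    have := g3 _ _ (g2 1 w w' a a' Aw Aw'); rewrite scale1r mul1r.
    have := pD (w - z) (w' + z).
    have -> : w - z + (w' + z) = w + w' by rewrite [w' + z]addrC addrA subrK.
    move=> H1 H2; lra.
  have hs : has_sup S by split => //; exists (p (0 + z) - 0); exact: Sub g4.
  pose c := sup S.
  have c_ub : forall w a, A (w, a) -> a - p (w - z) <= c.
    by move=> w a Aw; apply: sup_upper_bound => //; exists w, a.
  have c_lb : forall w a, A (w, a) -> c <= p (w + z) - a.
    by move=> w a Aw; apply: ge_sup => //; exact: Sub.
  have Ascale : forall (k : R) w a, A (w, a) -> A (k *: w, k * a).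
    by move=> k w a Aw; have := g2 k w 0 a 0 Aw g4; rewrite !addr0.
  pose B := [set q | exists w a s, A (w, a) /\ q = (w + s *: z, a + s * c)].
  apply: (Amax B); last first.
    right; split.
    - move=> z1 a1 b1 [w [a [s [Aw E1]]]] [w' [a' [s' [Aw' E2]]]].
      case: E1 => E1z ->; case: E2 => E2z ->.
      have Ez : w + s *: z = w' + s' *: z by rewrite -E1z -E2z.
      have [ss|ss] := eqVneq s s'.
        move: Ez; rewrite ss => /addIr ww; move: Aw; rewrite ww => Aw.
        by rewrite (g1 _ _ _ Aw Aw') ?ss.
      exfalso; apply: (nD ((s - s')^-1 * (a' - a))).
      have -> : z = (s - s')^-1 *: (w' - w).
        have : (s - s') *: z = w' - w.
          have E2 : s *: z = w' + s' *: z - w by rewrite -Ez [w + _]addrC addrK.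
          by rewrite scalerBl E2 addrAC addrK.
        move=> <-; rewrite scalerA mulVf ?scale1r // subr_eq0 //.
      apply: Ascale; have := g2 (-1) w w' a a' Aw Aw'.
      by rewrite scaleN1r mulN1r addrC [a' + _]addrC.
    - move=> k z1 z2 a1 a2 [w1 [b1 [s1 [Aw1 E1]]]] [w2 [b2 [s2 [Aw2 E2]]]].
      case: E1 => -> ->; case: E2 => -> ->.
      exists (k *: w1 + w2), (k * b1 + b2), (k * s1 + s2); split; first exact: g2.
      congr (_, _); last by ring.
      by rewrite scalerDr scalerA addrACA -scalerDl.
    - move=> z1 a1 [w [a [s [Aw E]]]]; case: E => -> ->.
      have [s0|s0|s0] := ltgtP s 0.
      + pose t := - s.
        have t0 : 0 < t by rewrite /t oppr_gt0.
        have := c_ub _ _ (Ascale t^-1 w a Aw).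
        have E : w + s *: z = t *: (t^-1 *: w - z).
          by rewrite scalerBr scalerA mulfV ?gt_eqF // scale1r /t scaleNr opprK.
        rewrite E pZ gtr0_norm // => H.
        have H2 : t * (t^-1 * a - p (t^-1 *: w - z)) <= t * c by rewrite ler_pM2l.
        move: H2; rewrite mulrBr mulrA mulfV ?gt_eqF // mul1r /t => H2; lra.
      + have := c_lb _ _ (Ascale s^-1 w a Aw).
        have E : w + s *: z = s *: (s^-1 *: w + z).
          by rewrite scalerDr scalerA mulfV ?gt_eqF // scale1r.
        rewrite E pZ gtr0_norm // => H.
        have H2 : s * c <= s * (p (s^-1 *: w + z) - s^-1 * a) by rewrite ler_pM2l.
        move: H2; rewrite mulrBr mulrA mulfV ?gt_eqF // mul1r => H2; lra.
      + by rewrite s0 scale0r addr0 mul0r addr0; exact: g3.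
    - by exists 0, 0, 0; rewrite scale0r addr0 mul0r addr0.
    - by exists y, (p y), 0; rewrite scale0r addr0 mul0r addr0.
  split.
    by move=> [w a] Aw; exists w, a, 0; rewrite scale0r addr0 mul0r addr0.
  move=> /(_ (z, c)) H; apply: (nD c); apply: H.
  by exists 0, 0, 1; rewrite scale1r add0r mul1r add0r.
pose l z := xget 0 [set a | A (z, a)].
have Al z : A (z, l z) by exact: (xgetPex 0 (Dtot z)).
exists l; split.
- by move=> c z w; apply: g1 (Al _) _; exact: g2.
- by move=> z; exact: g3.
- exact: g1 (Al y) g5.
Qed.

End HahnBanach.


Section Annihilator.
Context {R : realType} {X : normedModType R}.

Lemma lin_bounded_cont (l : X -> R) (K : R) :
  (forall (c : R) z w, l (c *: z + w) = c * l z + l w) ->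
  (forall z, `|l z| <= K * `|z|) -> 0 <= K -> continuous l.
Proof.
move=> lin bnd K0 z0.
have lB z w : l (z - w) = l z - l w.
  by have := lin (-1) w z; rewrite scaleN1r mulN1r addrC [- _ + _]addrC.
apply/cvgrPdist_lt => eps eps0.
apply/nbhs_ballP; exists (eps / (K + 1)) => /=.
  by rewrite divr_gt0 // ltr_wpDl.
move=> z; rewrite -ball_normE /ball_ /= => Hz.
rewrite -lB; apply: le_lt_trans (bnd _) _.
have K1 : 0 < K + 1 by rewrite ltr_wpDl.
move: Hz; rewrite ltr_pdivlMr // => Hz.
have n0 : 0 <= `|z0 - z| by exact: normr_ge0.
nra.
Qed.

Lemma annihilator (f : X -> R) (x y : X) : is_dual f -> (exists z, f z != 0) ->
  (forall a : R, y != a *: x) -> exists h, [/\ is_dual h, h x = 0 & exists z, h z != 0].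
Proof.
move=> df [z0 fz0] ny.
have [fx0|fx0] := eqVneq (f x) 0; first by exists f; split => //; exists z0.
pose P z := z - (f z / f x) *: x.
pose p z := `|P z|.
have PD z w : P (z + w) = P z + P w.
  by rewrite /P dualD // mulrDl scalerDl opprD addrACA.
have PZ (c : R) z : P (c *: z) = c *: P z.
  by rewrite /P dualZ // scalerBr scalerA mulrA.
have pD z w : p (z + w) <= p z + p w by rewrite /p PD ler_normD.
have pZ (c : R) z : p (c *: z) = `|c| * p z by rewrite /p PZ normrZ.
have [l [lin lp ly]] := @hahn_banach _ _ p y pD pZ.
have l0 : l 0 = 0 by have := lin 1 0 0; rewrite scale1r addr0 mul1r => H; lra.
have lN z : l (- z) = - l z.
  by have := lin (-1) z 0; rewrite scaleN1r addr0 l0 addr0 mulN1r.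
have pN z : p (- z) = p z by rewrite -scaleN1r pZ normrN normr1 mul1r.
have labs z : `|l z| <= p z.
  rewrite ler_norml lp andbT; have := lp (- z); rewrite lN pN => H; lra.
have [C C0 HC] := dual_bounded df.
have fx0' : 0 < `|f x| by rewrite normr_gt0.
exists l; split.
- split => //; apply: (@lin_bounded_cont l (1 + C * `|x| / `|f x|)) => //; last first.
    by rewrite addr_ge0 // divr_ge0 // mulr_ge0 // ltW.
  move=> z; apply: (le_trans (labs z)); rewrite /p /P.
  apply: (le_trans (ler_normB _ _)); rewrite normrZ normrM normfV.
  rewrite mulrDl mul1r lerD2l.
  have := HC z => Hz.
  have e : C * `|x| / `|f x| * `|z| = (C * `|z|) / `|f x| * `|x|.
    by field; rewrite gt_eqF.
  rewrite e; apply: ler_wpM2r; first exact: normr_ge0.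
  by apply: ler_wpM2r => //; rewrite invr_ge0 ltW.
- have px : p x = 0 by rewrite /p /P mulfV // scale1r subrr normr0.
  have := lp x; have := lp (- x); rewrite lN pN px => H1 H2; lra.
- exists y; rewrite ly /p normr_eq0 /P subr_eq0; exact: ny.
Qed.

Lemma exists_indep (x : X) :
  (exists x1 x2 : X, forall a b : R, a *: x1 + b *: x2 = 0 -> a = 0 /\ b = 0) ->
  exists y : X, forall a : R, y != a *: x.
Proof.
move=> [x1 [x2 H]].
apply: contrapT => N.
have N' : forall y : X, exists a : R, y = a *: x.
  move=> y; apply: contrapT => Ny; apply: N; exists y => a; apply/eqP => E.
  by apply: Ny; exists a.
have [a E1] := N' x1; have [b E2] := N' x2.
have [b0 a0] : b = 0 /\ - a = 0.
  by apply: H; rewrite E1 E2 !scalerA -scalerDl mulNr [a * b]mulrC subrr scale0r.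
move: a0 => /eqP; rewrite oppr_eq0 => /eqP a0.
have := H 1 0; rewrite E1 a0 !scale0r scaler0 addr0 => /(_ erefl) [].
by move=> /eqP; rewrite oner_eq0.
Qed.

End Annihilator.


Section PartB.
Context {R : realType} {X : normedModType R}.
Implicit Types (f g h : X -> R).

Lemma norming_point f e : is_dual f -> dnorm f = 1 -> 0 < e -> e < 1 ->
  exists x : X, `|x| = 1 /\ 1 - e < f x.
Proof.
move=> df nf e0 e1; have [x0 x01 Hx0] := dnorm_approx f e df e0.
rewrite nf in Hx0.
have x0n : x0 != 0.
  by apply/eqP => x00; move: Hx0; rewrite x00 (dual0 df) normr0 => H; lra.
have nx0 : 0 < `|x0| by rewrite normr_gt0.
pose s : R := if 0 <= f x0 then 1 else -1.
have ss : `|s| = 1 by rewrite /s; case: ifP => _; rewrite ?normrN normr1.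
have sf : s * f x0 = `|f x0|.
  rewrite /s; case: ifPn => H; first by rewrite mul1r ger0_norm.
  by rewrite mulN1r ltr0_norm // ltNge.
exists ((s / `|x0|) *: x0); split.
  by rewrite normrZ normrM ss mul1r normfV normr_id mulVf ?gt_eqF.
rewrite dualZ // mulrC mulrA [f x0 * s]mulrC sf.
apply: lt_le_trans Hx0 _.
by rewrite ler_pdivlMr // ler_piMr // normr_ge0.
Qed.

Lemma partb_pair f h (x : X) (t e : R) : is_dual f -> dnorm f = 1 ->
  is_dual h -> t / 4 <= dnorm h -> h x = 0 -> `|x| = 1 -> 1 - e < f x ->
  0 < t -> t < 2 -> 0 < e -> e <= 1/10 ->
  (@delta_dual R X (t / 20) <= ((dnorm (f \+ h) - 1) + 2 * e)%:E)%E.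
Proof.
move=> df nf dh hn hx x1 fxe t0 t2 e0 e1.
set N := dnorm (f \+ h).
have dfh := is_dualD df dh.
have fx1 : f x <= 1.
  by have := le_dnorm x df; rewrite nf x1 mul1r => /(le_trans (ler_norm _)).
have Nge : f x <= N.
  have := le_dnorm x dfh; rewrite -/N x1 mulr1 /= hx addr0.
  by move=> /(le_trans (ler_norm _)).
have N0 : 0 < N by lra.
pose g := fun z => N^-1 * (f \+ h) z.
have dg : is_dual g by exact: is_dualZ.
have ng : dnorm g = 1.
  by rewrite /g dnormZ // normfV gtr0_norm // mulVf ?gt_eqF.
have dfg := is_dualB df dg.
have Dge : t / 20 <= dnorm (f \- g).
  set D := dnorm (f \- g).
  have D0 : 0 <= D by exact: dnorm_ge0.
  rewrite leNgt; apply/negP => Dlt.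
  have H1 : `|f x - N^-1 * f x| <= D.
    by have := le_dnorm x dfg; rewrite x1 mulr1 /= /g /= hx addr0.
  have H2 : dnorm h <= N * D + `|N - 1|.
    apply: dnorm_le => z z1.
    have -> : h z = N * (g z - f z) + (N - 1) * f z.
      by rewrite /g /=; field; rewrite gt_eqF.
    apply: (le_trans (ler_normD _ _)); rewrite !normrM gtr0_norm //.
    apply: lerD.
      apply: ler_wpM2l; first exact: ltW.
      by rewrite distrC; exact: (dnorm_ub z dfg z1).
    rewrite -[leRHS]mulr1; apply: ler_wpM2l => //.
    by rewrite -nf; exact: (dnorm_ub z df z1).
  have H3 : `|N - 1| * f x <= D * N.
    have : `|N * (f x - N^-1 * f x)| <= N * D.
      by rewrite normrM gtr0_norm // ler_pM2l.
    have -> : N * (f x - N^-1 * f x) = (N - 1) * f x.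
      by field; rewrite gt_eqF.
    rewrite normrM [`|f x|]ger0_norm; last by lra.
    by rewrite mulrC [D * N]mulrC.
  set A := `|N - 1| in H2 H3.
  have A0 : 0 <= A by exact: normr_ge0.
  have NA : N <= 1 + A.
    by rewrite /A; have := ler_norm (N - 1); lra.
  have hA1 : A * (9/10) <= D * (1 + A) by nra.
  have hA2 : A * (8/10) <= D by nra.
  nra.
have mem : (@delta_dual R X (t / 20) <= (1 - dnorm (f \+ g) / 2)%:E)%E.
  by apply: ereal_inf_lbound; exists (f, g).
apply: (le_trans mem); rewrite lee_fin.
have Hfg : f x + N^-1 * f x <= dnorm (f \+ g).
  have := le_dnorm x (is_dualD df dg); rewrite x1 mulr1 /= /g /= hx addr0.
  by move=> /(le_trans (ler_norm _)).
set v := N^-1 * f x in Hfg.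
have vN : v * N = f x by rewrite /v mulrAC mulVf ?gt_eqF // mul1r.
have hq : 0 <= (N - (1 - e)) * (2 * N - 1 + e) by apply: mulr_ge0; lra.
have hv : (3 - 2 * N - 3 * e) * N <= v * N by rewrite vN; nra.
have hv2 : 3 - 2 * N - 3 * e <= v by move: hv; rewrite ler_pM2r.
lra.
Qed.

End PartB.


Section PartB2.
Context {R : realType} {X : normedModType R}.

Lemma partb (t : R) : 0 < t < 2 -> (@delta_dual R X (t / 20) <= @dstar R X t)%E.
Proof.
move=> /andP [t0 t2].
apply: le_ereal_inf_tmp => _ [f [df nf] <-].
apply/lee_addgt0Pr => e e0.
pose ep := e / (2 + 20 * e).
have d0 : 0 < 2 + 20 * e by lra.
have ep0 : 0 < ep by rewrite divr_gt0.
have ep1 : ep <= 1/10 by rewrite ler_pdivrMr //; lra.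
have epe : 2 * ep <= e.
  have : ep * (2 + 20 * e) = e by rewrite mulfVK ?gt_eqF.
  nra.
have ep2 : ep < 1 by lra.
have [x [x1 fx]] := norming_point f ep df nf ep0 ep2.
have : (@delta_dual R X (t / 20) - (2 * ep)%:E <= sstar f x t)%E.
  apply: le_ereal_inf_tmp => _ [h [dh hn hx] <-].
  rewrite leeBlDr // -EFinD; exact: (partb_pair f h x t ep df nf dh hn hx x1 fx t0 t2 ep0 ep1).
rewrite leeBlDr // => H.
apply: (le_trans H).
have H2 : (sstar f x t <= dstar_f f t)%E by apply: ereal_sup_ubound; exists x.
by apply: leeD => //; rewrite lee_fin.
Qed.

End PartB2.


Section PartA.
Context {R : realType} {X : normedModType R}.
Implicit Types (f g h : X -> R).

Lemma dstar_le (s v : R) f0 : is_dual f0 -> dnorm f0 = 1 ->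
  (forall x : X, `|x| = 1 -> exists h, [/\ is_dual h, s / 4 <= dnorm h, h x = 0 &
      dnorm (f0 \+ h) - 1 <= v]) -> (@dstar R X s <= v%:E)%E.
Proof.
move=> d0 n0 H.
apply: (le_trans (ereal_inf_lbound _)); first by exists f0.
apply: ge_ereal_sup => _ [x x1 <-].
have [h [dh hn hx hv]] := H x x1.
apply: (le_trans (ereal_inf_lbound _)); first by exists h.
by rewrite lee_fin.
Qed.

Lemma dnorm_sum f f1 f2 : is_dual f1 -> is_dual f2 -> (forall z, f z = f1 z + f2 z) ->
  dnorm f <= dnorm f1 + dnorm f2.
Proof.
move=> d1 d2 E; apply: dnorm_le => z z1; rewrite E.
apply: (le_trans (ler_normD _ _)); apply: lerD; exact: dnorm_ub.
Qed.

Lemma dnorm_scale f f1 (a : R) : is_dual f1 -> (forall z, f z = a * f1 z) ->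
  dnorm f = `|a| * dnorm f1.
Proof.
move=> d1 E; have -> : f = (fun z => a * f1 z) by apply/funext => z; exact: E.
exact: dnormZ.
Qed.

Lemma is_dual_ext f f1 : is_dual f1 -> (forall z, f z = f1 z) -> is_dual f.
Proof. by move=> d1 E; have -> : f = f1 by apply/funext. Qed.

Lemma parta_big (t : R) f g : (forall x : X, exists y, forall a : R, y != a *: x) ->
  0 < t -> is_dual f -> dnorm f = 1 -> is_dual g -> dnorm g = 1 ->
  t / 16 <= 1 - dnorm (f \+ g) / 2 ->
  (@dstar R X (t / 4) <= (1 - dnorm (f \+ g) / 2)%:E)%E.
Proof.
move=> hy t0 df nf dg ng.
set d := 1 - dnorm (f \+ g) / 2 => dbig.
apply: (@dstar_le (t / 4) d f df nf) => x x1.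
have h12 : (0:R) < 1/2 by lra.
have h12' : (1/2:R) < 1 by lra.
have [z [_ fz]] := norming_point f (1/2) df nf h12 h12'.
have fz0 : f z != 0 by apply/eqP => E; move: fz; rewrite E; lra.
have [y ny] := hy x.
have [h0 [dh0 h0x [z0 h0z]]] := annihilator f x y df (ex_intro _ z fz0) ny.
have hp : 0 < dnorm h0 := dnorm_pos h0 z0 dh0 h0z.
have d0 : 0 <= d by lra.
have nh : dnorm (fun w => (d / dnorm h0) * h0 w) = d.
  rewrite dnormZ // ger0_norm; last by rewrite divr_ge0 // ltW.
  by rewrite divfK // gt_eqF.
exists (fun w => (d / dnorm h0) * h0 w); split.
- exact: is_dualZ.
- by rewrite nh; lra.
- by rewrite h0x mulr0.
- have := dnormD df (is_dualZ (d / dnorm h0) dh0); rewrite nf nh => H; lra.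
Qed.

Lemma parta_small (t : R) f g : 0 < t -> t < 2 ->
  is_dual f -> dnorm f = 1 -> is_dual g -> dnorm g = 1 -> t <= dnorm (f \- g) ->
  1 - dnorm (f \+ g) / 2 < t / 16 ->
  (@dstar R X (t / 4) <= (1 - dnorm (f \+ g) / 2)%:E)%E.
Proof.
move=> t0 t2 df nf dg ng tfg.
have dfg := is_dualD df dg; have dmfg := is_dualB df dg.
have S2 : dnorm (f \+ g) <= 2 by have := dnormD df dg; rewrite nf ng => H; lra.
set S := dnorm (f \+ g) in S2 *.
move=> dsmall.
pose r := S / 2.
have Er : S / 2 = r by [].
rewrite Er in dsmall *.
set d := 1 - r in dsmall *.
have dsm : 1 - r < t / 16 by [].
have rS : r * 2 = S by rewrite /r; field.
have dd : d = 1 - r by [].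
have r0 : 0 < r by lra.
have r1 : r <= 1 by lra.
have S0 : 0 < S by lra.
pose m z := 2^-1 * (f \+ g) z.
pose u z := 2^-1 * (f \- g) z.
have dm : is_dual m := is_dualZ _ dfg.
have du : is_dual u := is_dualZ _ dmfg.
have nm : dnorm m = r by rewrite /m dnormZ // ger0_norm ?invr_ge0 // mulrC.
have nu : t / 2 <= dnorm u.
  by rewrite /u dnormZ // ger0_norm ?invr_ge0 //; lra.
pose f0 z := S^-1 * (f \+ g) z.
have df0 : is_dual f0 := is_dualZ _ dfg.
have nf0 : dnorm f0 = 1 by rewrite /f0 dnormZ // gtr0_norm ?invr_gt0 // mulVf ?gt_eqF.
have f0m z : f0 z = r^-1 * m z by rewrite /f0 /m /r; field; rewrite gt_eqF.
have mb z : `|z| <= 1 -> `|m z| <= r by move=> z1; rewrite -nm; exact: dnorm_ub.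
have fb z : `|z| <= 1 -> `|f z| <= 1 by move=> z1; rewrite -nf; exact: dnorm_ub.
have gb z : `|z| <= 1 -> `|g z| <= 1 by move=> z1; rewrite -ng; exact: dnorm_ub.
have d0 : 0 <= d by lra.
apply: (@dstar_le (t / 4) d f0 df0 nf0) => x x1.
set q := m x; set p := u x.
have [q0|q0] := eqVneq q 0.
  exists (fun z => (-1) * f0 z); split.
  - exact: is_dualZ.
  - by rewrite dnormZ // nf0 normrN normr1 mulr1; lra.
  - by rewrite f0m -/q q0 !mulr0.
  - suff : dnorm (f0 \+ (fun z => (-1) * f0 z)) <= 0 by move=> H; lra.
    by apply: dnorm_le => z _ /=; rewrite mulN1r subrr normr0.
pose e : R := if 0 <= p * q then 1 else -1.
have ae : `|e| = 1 by rewrite /e; case: ifP => _; rewrite ?normrN normr1.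
have ee : e * e = 1 by rewrite /e; case: ifP => _; rewrite ?mulrNN mulr1.
have epq : 0 <= e * p * q.
  rewrite /e; case: ifPn => H; first by rewrite mul1r.
  by rewrite mulN1r mulNr oppr_ge0 ltW // ltNge.
have hep : `|e * p| = `|p| by rewrite normrM ae mul1r.
have key : e * p * `|q| = `|p| * q.
  have [hq|hq|hq] := ltgtP q 0.
  - have H : e * p <= 0 by nra.
    by rewrite -hep (ler0_norm H) (ltr0_norm hq); ring.
  - have H : 0 <= e * p by nra.
    by rewrite -hep (ger0_norm H) (gtr0_norm hq).
  - by move: q0; rewrite hq eqxx.
have aq : 0 < `|q| by rewrite normr_gt0.
have ap : 0 <= `|p| by exact: normr_ge0.
pose w z := m z + e * u z.
have dw : is_dual w.
  apply: (@is_dual_ext _ (m \+ (fun z => e * u z))); last by [].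
  by apply: is_dualD => //; exact: is_dualZ.
have wb z : `|z| <= 1 -> `|w z| <= 1.
  move=> z1; rewrite /w /m /u /e /=; case: ifP => _.
    have -> : 2^-1 * (f z + g z) + 1 * (2^-1 * (f z - g z)) = f z by field.
    exact: fb.
  have -> : 2^-1 * (f z + g z) + -1 * (2^-1 * (f z - g z)) = g z by field.
  exact: gb.
have [nc|cone] := lerP (`|p| * r) (d * `|q|).
  pose c := `|p| / `|q|.
  have c0 : 0 <= c by rewrite /c divr_ge0 // ltW.
  have cq : c * q = e * p.
    by rewrite /c mulrAC -key mulfK // gt_eqF.
  have cr : c * r <= d.
    by rewrite /c mulrAC ler_pdivrMr.
  exists (fun z => - c * m z + e * u z); split.
  - apply: (@is_dual_ext _ ((fun z => - c * m z) \+ (fun z => e * u z))); last by [].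
    by apply: is_dualD; exact: is_dualZ.
  - have dh : is_dual (fun z => - c * m z + e * u z).
      apply: (@is_dual_ext _ ((fun z => - c * m z) \+ (fun z => e * u z))); last by [].
      by apply: is_dualD; exact: is_dualZ.
    have H1 : dnorm u = `|e| * dnorm (fun z => (- c * m z + e * u z) + c * m z).
      apply: dnorm_scale => //.
        apply: (@is_dual_ext _ ((fun z => - c * m z + e * u z) \+ (fun z => c * m z))); last by [].
        by apply: is_dualD => //; exact: is_dualZ.
      move=> z; have -> : e * (- c * m z + e * u z + c * m z) = (e * e) * u z by ring.
      by rewrite ee mul1r.
    have H2 : dnorm (fun z => (- c * m z + e * u z) + c * m z) <=
        dnorm (fun z => - c * m z + e * u z) + dnorm (fun z => c * m z).
      by apply: dnorm_sum => //; exact: is_dualZ.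
    have H3 : dnorm u <= dnorm (fun z => - c * m z + e * u z) + c * r.
      by rewrite H1 ae mul1r; apply: (le_trans H2); rewrite dnormZ // nm ger0_norm.
    lra.
  - by rewrite -/q -/p mulNr cq addNr.
  - suff : dnorm (f0 \+ (fun z => - c * m z + e * u z)) <= 1 + d by move=> H; lra.
    apply: dnorm_le => z z1 /=.
    have -> : f0 z + (- c * m z + e * u z) = (r^-1 - c - 1) * m z + w z.
      by rewrite f0m /w; ring.
    have rc : 0 <= r^-1 - c - 1.
      have : c <= r^-1 - 1.
        by rewrite -(ler_pM2r r0) mulrBl mulVf ?gt_eqF // mul1r; lra.
      lra.
    apply: (le_trans (ler_normD _ _)); rewrite normrM ger0_norm //.
    have := mb z z1; have := wb z z1 => Hw Hm.
    have : (r^-1 - c - 1) * `|m z| <= (r^-1 - c - 1) * r by exact: ler_wpM2l.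
    have -> : (r^-1 - c - 1) * r = 1 - c * r - r by rewrite !mulrBl mulVf ?gt_eqF // mul1r.
    move=> H; nra.
pose s := `|q| / (r * (`|q| + `|p|)).
have D0 : 0 < r * (`|q| + `|p|) by rewrite mulr_gt0 // ltr_wpDr.
have s0 : 0 <= s by rewrite /s divr_ge0 // ltW.
have s1 : s <= 1.
  by rewrite /s ler_pdivrMr // mul1r; rewrite /d in cone; nra.
have dh : is_dual (fun z => s * w z - f0 z).
  apply: (@is_dual_ext _ ((fun z => s * w z) \- f0)); last by [].
  by apply: is_dualB => //; exact: is_dualZ.
have dsw : is_dual (fun z => s * w z) by exact: is_dualZ.
have nsw : dnorm (fun z => s * w z) <= s.
  apply: dnorm_le => z z1; rewrite normrM ger0_norm //.
  by rewrite -[leRHS]mulr1; apply: ler_wpM2l => //; exact: wb.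
exists (fun z => s * w z - f0 z); split => //.
- have E1 : 1 <= s + dnorm (fun z => s * w z - f0 z).
    have Hs : forall z, f0 z = s * w z + (-1) * (s * w z - f0 z) by move=> z; ring.
    have := dnorm_sum _ _ _ dsw (is_dualZ (-1) dh) Hs.
    rewrite nf0 dnormZ // normrN normr1 mul1r => H; lra.
  have E2 : s * dnorm u <= dnorm (fun z => s * w z - f0 z) + (r^-1 - s) * r.
    have -> : s * dnorm u = dnorm (fun z => (s * e) * u z).
      have -> : dnorm (fun z => (s * e) * u z) = `|s * e| * dnorm u by exact: dnormZ.
      by rewrite normrM ae mulr1 ger0_norm.
    apply: (le_trans (@dnorm_sum _ _ (fun z => (r^-1 - s) * m z) dh _ _)).
    + exact: is_dualZ.
    + by move=> z; rewrite /w f0m; ring.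
    rewrite lerD2l dnormZ // nm ger0_norm //.
    have : 1 <= r^-1 by rewrite invr_ge1 // ?unitfE ?gt_eqF.
    lra.
  move: E2; rewrite mulrBl mulVf ?gt_eqF // => E2.
  set Dh := dnorm _ in E1 E2 *.
  have [sl|sg] := lerP s (1 - t / 16); first lra.
  have : (1 - t / 16) * (t / 2 + r) <= s * (dnorm u + r).
    apply: ler_pM; [lra | lra | exact: ltW | lra].
  nra.
- rewrite /w -/q -/p f0m -/q.
  have E : `|q| * (q + e * p) = q * (`|q| + `|p|).
    by rewrite mulrDr [`|q| * (e * p)]mulrC key; ring.
  rewrite /s mulrAC E; field.
  by rewrite !gt_eqF // ltr_wpDr.
- suff : dnorm (f0 \+ (fun z => s * w z - f0 z)) <= 1 by move=> H; lra.
  have -> : f0 \+ (fun z => s * w z - f0 z) = (fun z => s * w z).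
    by apply/funext => z /=; ring.
  lra.
Qed.

End PartA.


Theorem mainTheorem10 (R : realType) (X : completeNormedModType R)
  (hdim : exists x y : X, forall a b : R, a *: x + b *: y = 0 -> a = 0 /\ b = 0)
  (hpos : forall t : R, 0 < t < 2 -> (0 < @dstar R X t)%E) :
  forall t : R, 0 < t < 2 ->
    (@dstar R X (t / 4) <= @delta_dual R X t)%E /\
    (@delta_dual R X (t / 20) <= @dstar R X t)%E.
Proof.
move=> t /andP [t0 t2]; split; last by apply: partb; rewrite t0 t2.
apply: le_ereal_inf_tmp => _ [[f g] [df nf dg ng fg] <-] /=.
have hy : forall x : X, exists y : X, forall a : R, y != a *: x.
  by move=> x; exact: exists_indep.
have [big|small] := lerP (t / 16) (1 - dnorm (f \+ g) / 2).
  exact: parta_big.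
exact: parta_small.
Qed.
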